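(* Let $\mathbf{T}^{\mathrm{CoR}}_{\le 0}$ be the set of CoR terms containing no variables. Then $\mathbf{T}^{\mathrm{CoR}}_{\le 0}/{\sim_{\mathrm{REL}_{\ge 3}}} = \{[\bot], [\top], [\mathrm{I}], [\mathrm{D}]\}$, where $[t]$ denotes the $\sim_{\mathrm{REL}_{\ge 3}}$-class of $t$.
   Context: Fix a non-empty finite set $V$ of variables. CoR terms are generated by $t ::= a \mid \bot \mid \top \mid t \cup t \mid t \cap t \mid t^{-} \mid \mathrm{I} \mid \mathrm{D} \mid t \cdot t \mid t \dagger t \mid t^{\pi}$, where $a \in V$ and $\pi$ ranges over all maps $\{1,2\}\to\{1,2\}$. A structure $M$ consists of a non-empty set $|M|$ and a binary relation $a^M\subseteq|M|^2$ for each $a\in V$. The interpretation $[\![t]\!]_M\subseteq|M|^2$: $[\![a]\!]_M=a^M$, $[\![\bot]\!]_M=\emptyset$, $[\![\top]\!]_M=|M|^2$, $\cup,\cap$ set-theoretic, $[\![t^-]\!]_M=|M|^2\setminus[\![t]\!]_M$, $[\![\mathrm{I}]\!]_M=\{(x,y):x=y\}$, $[\![\mathrm{D}]\!]_M=\{(x,y):x\ne y\}$, $R\cdot S=\{(x,y):\exists z,(x,z)\in R\wedge(z,y)\in S\}$, $R\dagger S=\{(x,y):\forall z,(x,z)\in R\vee(z,y)\in S\}$, $R^{\pi}=\{(x_1,x_2):(x_{\pi(1)},x_{\pi(2)})\in R\}$. $\mathrm{REL}_{\ge 3}$ is the class of structures with $|M|$ of cardinality at least $3$; $t\sim_{\mathrm{REL}_{\ge3}}s$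 iff $[\![t]\!]_M=[\![s]\!]_M$ for all $M\in\mathrm{REL}_{\ge 3}$. *)

(* Defs.v *)
From Stdlib Require Import List.

Inductive idx2 : Type := one | two.

Inductive term (V : Type) : Type :=
| Var  : V -> term V
| Bot  : term V
| Top  : term V
| Cup  : term V -> term V -> term V
| Cap  : term V -> term V -> term V
| Compl : term V -> term V
| Id   : term V
| Di   : term V
| Comp : term V -> term V -> term V
| Dag  : term V -> term V -> term V
| Perm : (idx2 -> idx2) -> term V -> term V.

Arguments Var {V} _.
Arguments Bot {V}.
Arguments Top {V}.
Arguments Cup {V} _ _.
Arguments Cap {V} _ _.
Arguments Compl {V} _.
Arguments Id {V}.
Arguments Di {V}.
Arguments Comp {V} _ _.
Arguments Dag {V} _ _.
Arguments Perm {V} _ _.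

Record structure (V : Type) : Type := {
  car : Type;
  car_inhabited : inhabited car;
  rel : V -> car -> car -> Prop
}.
Arguments car {V} _.
Arguments rel {V} _ _ _ _.

Definition pair_env {X : Type} (x1 x2 : X) (i : idx2) : X :=
  match i with one => x1 | two => x2 end.

Fixpoint interp {V : Type} (M : structure V) (t : term V) : car M -> car M -> Prop :=
  match t with
  | Var a => rel M a
  | Bot => fun _ _ => False
  | Top => fun _ _ => True
  | Cup t1 t2 => fun x y => interp M t1 x y \/ interp M t2 x y
  | Cap t1 t2 => fun x y => interp M t1 x y /\ interp M t2 x y
  | Compl t1 => fun x y => ~ interp M t1 x y
  | Id => fun x y => x = y
  | Di => fun x y => x <> y
  | Comp t1 t2 => fun x y => exists z, interp M t1 x z /\ interp M t2 z y
  | Dag t1 t2 => fun x y => forall z, interp M t1 x z \/ interp M t2 z y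
  | Perm p t1 => fun x1 x2 =>
      interp M t1 (pair_env x1 x2 (p one)) (pair_env x1 x2 (p two))
  end.

Definition REL_ge3 {V : Type} (M : structure V) : Prop :=
  exists x y z : car M, x <> y /\ y <> z /\ x <> z.

Definition equiv_REL3 {V : Type} (t s : term V) : Prop :=
  forall M : structure V, REL_ge3 M ->
    forall x y : car M, interp M t x y <-> interp M s x y.

Fixpoint var_free {V : Type} (t : term V) : Prop :=
  match t with
  | Var _ => False
  | Bot | Top | Id | Di => True
  | Cup t1 t2 | Cap t1 t2 | Comp t1 t2 | Dag t1 t2 => var_free t1 /\ var_free t2
  | Compl t1 | Perm _ t1 => var_free t1
  end.

Definition cls {V : Type} (t : term V) : term V -> Prop :=
  fun s => var_free s /\ equiv_REL3 s t.

Definition in_quotient {V : Type} (C : term V -> Prop) : Prop :=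
  exists t, var_free t /\ C = cls t.

(* Main.v *)
Require Import Defs.
From Stdlib Require Import Setoid List Bool Classical FunctionalExtensionality PropExtensionality.

Definition sem {X : Type} (a b : bool) (x y : X) : Prop :=
  (x = y /\ a = true) \/ (x <> y /\ b = true).

Lemma third {V} (M : structure V) : REL_ge3 M -> forall x y : car M, exists z, z <> x /\ z <> y.
Proof.
  intros [p [q [r [H1 [H2 H3]]]]] x y.
  destruct (classic (p = x)); destruct (classic (p = y)); [ | | |eauto];
  destruct (classic (q = x)); destruct (classic (q = y)); try (eauto; fail);
  destruct (classic (r = x)); destruct (classic (r = y)); try (eauto; fail); congruence.
Qed.

Lemma third1 {V} (M : structure V) : REL_ge3 M -> forall x : car M, exists z, z <> x.
Proof. intros H x. destruct (third M H x x) as [z [? ?]]. eauto. Qed.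

Lemma sem_compl {X} a b (x y : X) : ~ sem a b x y <-> sem (negb a) (negb b) x y.
Proof.
  unfold sem; destruct a, b; simpl; destruct (classic (x = y)); intuition congruence.
Qed.

Lemma sem_comp {V} (M : structure V) (HM : REL_ge3 M) a b c d (x y : car M) :
  (exists z, sem a b x z /\ sem c d z y) <->
  sem (a && c || b && d) (a && d || b && c || b && d) x y.
Proof.
  split.
  - intros [z [H1 H2]]. unfold sem in *.
    destruct (classic (x = y)), (classic (x = z)), (classic (z = y));
      destruct a, b, c, d; simpl in *; intuition congruence.
  - intros Hs. unfold sem in Hs.
    destruct Hs as [[<- Hb]|[Hn Hb]].
    + apply orb_true_iff in Hb as [Hb|Hb]; apply andb_true_iff in Hb as [Hb1 Hb2].
      * exists x; unfold sem; split; left; auto.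
      * destruct (third1 M HM x) as [z Hz]. exists z; unfold sem; split; right; auto.
    + apply orb_true_iff in Hb as [Hb|Hb]; [apply orb_true_iff in Hb as [Hb|Hb]|];
        apply andb_true_iff in Hb as [Hb1 Hb2].
      * exists x; unfold sem; split; [left|right]; auto.
      * exists y; unfold sem; split; [right|left]; auto.
      * destruct (third M HM x y) as [z [Hz1 Hz2]]. exists z; unfold sem; split; right; auto.
Qed.

Lemma sem_sym {X} a b (x y : X) : sem a b x y <-> sem a b y x.
Proof. unfold sem; intuition congruence. Qed.

Lemma sem_refl {X} a b (x : X) : sem a b x x <-> a = true.
Proof. unfold sem; intuition congruence. Qed.

Definition Rsem {V} (t : term V) a b :=
  forall M : structure V, REL_ge3 M -> forall x y, interp M t x y <-> sem a b x y.

Lemma main {V} (t : term V) : var_free t -> exists a b, Rsem t a b.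
Proof.
  induction t; simpl; intros Hv.
  - contradiction.
  - exists false, false; intros M HM x y; simpl; unfold sem; intuition congruence.
  - exists true, true; intros M HM x y; simpl; unfold sem.
    destruct (classic (x = y)); intuition.
  - destruct Hv as [H1 H2]; destruct (IHt1 H1) as [a [b Ha]]; destruct (IHt2 H2) as [c [d Hc]].
    exists (a || c), (b || d); intros M HM x y; simpl; pose proof (Ha M HM x y); pose proof (Hc M HM x y); unfold sem in *.
    destruct (classic (x = y)); destruct a, b, c, d; simpl in *; intuition congruence.
  - destruct Hv as [H1 H2]; destruct (IHt1 H1) as [a [b Ha]]; destruct (IHt2 H2) as [c [d Hc]].
    exists (a && c), (b && d); intros M HM x y; simpl; pose proof (Ha M HM x y); pose proof (Hc M HM x y); unfold sem in *.
    destruct (classic (x = y)); destruct a, b, c, d; simpl in *; intuition congruence.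
  - destruct (IHt Hv) as [a [b Ha]]. exists (negb a), (negb b); intros M HM x y; simpl.
    rewrite (Ha M HM x y). apply sem_compl.
  - exists true, false; intros M HM x y; simpl; unfold sem; intuition congruence.
  - exists false, true; intros M HM x y; simpl; unfold sem.
    destruct (classic (x = y)); intuition.
  - destruct Hv as [H1 H2]; destruct (IHt1 H1) as [a [b Ha]]; destruct (IHt2 H2) as [c [d Hc]].
    eexists; eexists; intros M HM x y; simpl.
    rewrite <- (sem_comp M HM).
    split; intros [z Hz]; exists z; rewrite (Ha M HM x z), (Hc M HM z y) in *; exact Hz.
  - destruct Hv as [H1 H2]; destruct (IHt1 H1) as [a [b Ha]]; destruct (IHt2 H2) as [c [d Hc]].
    set (a' := negb a); set (b' := negb b); set (c' := negb c); set (d' := negb d).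
    exists (negb (a' && c' || b' && d')), (negb (a' && d' || b' && c' || b' && d')).
    intros M HM x y; simpl.
    rewrite <- sem_compl, <- (sem_comp M HM).
    split.
    + intros H [z [Hz1 Hz2]]. apply sem_compl in Hz1; apply sem_compl in Hz2.
      rewrite <- (Ha M HM) in Hz1; rewrite <- (Hc M HM) in Hz2.
      destruct (H z); contradiction.
    + intros H z. destruct (classic (interp M t1 x z)) as [?|H1']; auto.
      destruct (classic (interp M t2 z y)) as [?|H2']; auto.
      exfalso; apply H; exists z.
      rewrite (Ha M HM) in H1'; rewrite (Hc M HM) in H2'.
      split; apply sem_compl; auto.
  - destruct (IHt Hv) as [a [b Ha]].
    destruct (i one) eqn:E1; destruct (i two) eqn:E2.
    + exists a, a; intros M HM x y; simpl; rewrite E1, E2; simpl.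
      rewrite (Ha M HM), sem_refl. unfold sem; destruct (classic (x = y)); intuition congruence.
    + exists a, b; intros M HM x y; simpl; rewrite E1, E2; simpl; auto.
    + exists a, b; intros M HM x y; simpl; rewrite E1, E2; simpl.
      rewrite (Ha M HM); apply sem_sym.
    + exists a, a; intros M HM x y; simpl; rewrite E1, E2; simpl.
      rewrite (Ha M HM), sem_refl. unfold sem; destruct (classic (x = y)); intuition congruence.
Qed.

Lemma cls_eq {V} (t k : term V) : equiv_REL3 t k -> cls t = cls k.
Proof.
  intros H. extensionality s. apply propositional_extensionality. unfold cls, equiv_REL3 in *.
  split; intros [Hv Hs]; split; auto; intros M HM x y.
  - rewrite (Hs M HM). auto.
  - rewrite (Hs M HM). symmetry; auto.
Qed.

Theorem lemma4p3 (V : Type)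
  (HVfin : exists l : list V, forall v : V, In v l)
  (HVne : inhabited V) :
  forall C : term V -> Prop,
    in_quotient C <->
    (C = cls Bot \/ C = cls Top \/ C = cls Id \/ C = cls Di).
Proof.
  intros C; split.
  - intros [t [Hv ->]]. destruct (main t Hv) as [a [b Hab]].
    destruct a, b; [right; left | right; right; left | right; right; right | left];
      apply cls_eq; intros M HM x y; rewrite (Hab M HM); simpl; unfold sem;
      try (destruct (classic (x = y)); intuition congruence).
  - intros [ E | [ E | [ E | E ] ] ]; subst C; eexists; split; try reflexivity; simpl; auto.
Qed.
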